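(* (1) For any group $(G,\cdot)$, setting $a\triangleright b=a^{-1}ba$ makes $(G,\cdot,\triangleright)$ a post-group. (2) For any two-step nilpotent group $(G,\cdot)$ and any integer $n\neq 0$, setting $a\triangleright b=a^{-n}ba^{n}$ makes $(G,\cdot,\triangleright)$ a post-group.
   Context: A post-group is a triple $(G,\cdot,\triangleright)$ with $(G,\cdot)$ a group and $\triangleright$ a binary operation such that for each $a$ the map $b\mapsto a\triangleright b$ is an automorphism of $(G,\cdot)$ and $a\triangleright(b\triangleright c)=(a\cdot(a\triangleright b))\triangleright c$ for all $a,b,c\in G$. A two-step nilpotent group is a group of nilpotency class at most $2$, i.e. all commutators $[a,b]=a^{-1}b^{-1}ab$ are central. *)

(* Defs.v *)
From Stdlib Require Import ZArith.

Section GroupDefs.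
Variable G : Type.
Variable mul : G -> G -> G.
Variable e : G.
Variable inv : G -> G.

Definition is_group : Prop :=
  (forall a b c, mul a (mul b c) = mul (mul a b) c) /\
  (forall a, mul e a = a) /\ (forall a, mul a e = a) /\
  (forall a, mul (inv a) a = e) /\ (forall a, mul a (inv a) = e).

Definition is_automorphism (f : G -> G) : Prop :=
  (forall x y, f (mul x y) = mul (f x) (f y)) /\
  (exists g : G -> G, (forall x, g (f x) = x) /\ (forall y, f (g y) = y)).

Definition is_post_group (tri : G -> G -> G) : Prop :=
  is_group /\
  (forall a, is_automorphism (tri a)) /\
  (forall a b c, tri a (tri b c) = tri (mul a (tri a b)) c).

Fixpoint npow (x : G) (n : nat) : G :=
  match n with
  | O => e
  | S k => mul (npow x k) x
  end.

Definition zpow (x : G) (n : Z) : G :=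
  match n with
  | Z0 => e
  | Zpos p => npow x (Pos.to_nat p)
  | Zneg p => npow (inv x) (Pos.to_nat p)
  end.

Definition commutator (a b : G) : G := mul (mul (mul (inv a) (inv b)) a) b.

Definition two_step_nilpotent : Prop :=
  forall a b c, mul (commutator a b) c = mul c (commutator a b).

End GroupDefs.

Arguments is_group {G}.
Arguments is_automorphism {G}.
Arguments is_post_group {G}.
Arguments npow {G}.
Arguments zpow {G}.
Arguments commutator {G}.
Arguments two_step_nilpotent {G}.

(* Main.v *)
Require Import Defs.
From Stdlib Require Import ZArith.

Section Grp.
Variable G : Type.
Variable mul : G -> G -> G.
Variable e : G.
Variable inv : G -> G.
Hypothesis HG : is_group mul e inv.

Lemma massoc a b c : mul a (mul b c) = mul (mul a b) c.
Proof. apply HG. Qed.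
Lemma m_el a : mul e a = a. Proof. apply HG. Qed.
Lemma m_er a : mul a e = a. Proof. apply HG. Qed.
Lemma m_vl a : mul (inv a) a = e. Proof. apply HG. Qed.
Lemma m_vr a : mul a (inv a) = e. Proof. apply HG. Qed.
Lemma cancel_l x y : mul (inv x) (mul x y) = y.
Proof. rewrite massoc, m_vl, m_el. reflexivity. Qed.
Lemma cancel_r x y : mul x (mul (inv x) y) = y.
Proof. rewrite massoc, m_vr, m_el. reflexivity. Qed.
Lemma inv_uniq a b : mul a b = e -> inv a = b.
Proof. intro H. pose proof (cancel_l a b) as H1. rewrite H, m_er in H1. exact H1. Qed.
Lemma inv_inv x : inv (inv x) = x.
Proof. apply inv_uniq. apply m_vl. Qed.
Lemma inv_mul x y : inv (mul x y) = mul (inv y) (inv x).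
Proof. apply inv_uniq. rewrite <- !massoc, cancel_r, m_vr. reflexivity. Qed.
Lemma inv_e : inv e = e.
Proof. apply inv_uniq. apply m_el. Qed.

Ltac gsimp := repeat progress (rewrite ?inv_mul, ?inv_inv, ?inv_e, ?m_el, ?m_er,
   ?cancel_l, ?cancel_r, ?m_vl, ?m_vr, <- ?massoc).

Lemma conj_auto u : is_automorphism mul (fun b => mul (mul (inv u) b) u).
Proof.
  split.
  - intros x y. gsimp. reflexivity.
  - exists (fun y => mul (mul u y) (inv u)). split; intros; gsimp; reflexivity.
Qed.

Definition central z := forall c, mul z c = mul c z.
Definition eqv x y := exists z, central z /\ y = mul x z.

Lemma eqv_refl x : eqv x x.
Proof. exists e. split. intro c. rewrite m_el, m_er. reflexivity. rewrite m_er; reflexivity. Qed.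

Lemma central_inv z : central z -> central (inv z).
Proof.
  intros Hz c. transitivity (mul (inv z) (mul (mul c z) (inv z))).
  - gsimp. reflexivity.
  - rewrite <- (Hz c). gsimp. reflexivity.
Qed.

Lemma central_mul z1 z2 : central z1 -> central z2 -> central (mul z1 z2).
Proof.
  intros H1 H2 c. rewrite <- massoc, H2, massoc, H1, massoc. reflexivity.
Qed.

Lemma eqv_of_eq x y : x = y -> eqv x y.
Proof. intros ->; apply eqv_refl. Qed.

Lemma eqv_sym x y : eqv x y -> eqv y x.
Proof.
  intros [z [Hz ->]]. exists (inv z). split. apply central_inv; auto.
  gsimp. reflexivity.
Qed.

Lemma eqv_trans x y w : eqv x y -> eqv y w -> eqv x w.
Proof.
  intros [z1 [H1 ->]] [z2 [H2 ->]]. exists (mul z1 z2). split.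
  apply central_mul; auto. gsimp; reflexivity.
Qed.

Lemma eqv_mul x x' y y' : eqv x x' -> eqv y y' -> eqv (mul x y) (mul x' y').
Proof.
  intros [z1 [H1 ->]] [z2 [H2 ->]]. exists (mul z1 z2). split.
  apply central_mul; auto.
  rewrite <- !massoc. rewrite (massoc z1 y z2), (H1 y), <- massoc. reflexivity.
Qed.

Lemma conj_eqv x y c : eqv x y ->
  mul (mul (inv y) c) y = mul (mul (inv x) c) x.
Proof.
  intros [z [Hz ->]].
  set (w := mul (mul (inv x) c) x).
  transitivity (mul (mul (inv z) w) z).
  - unfold w. gsimp. reflexivity.
  - rewrite <- massoc, <- (Hz w), cancel_l. reflexivity.
Qed.


Lemma npow_comm x m : mul (npow mul e x m) x = mul x (npow mul e x m).
Proof.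
  induction m; simpl. rewrite m_el, m_er; reflexivity.
  rewrite IHm at 1. rewrite massoc. reflexivity.
Qed.

Lemma npow_inv x m : npow mul e (inv x) m = inv (npow mul e x m).
Proof.
  induction m; simpl. rewrite inv_e; reflexivity.
  rewrite inv_mul, <- IHm, npow_comm. reflexivity.
Qed.

Lemma zpow_opp x n : zpow mul e inv x (- n) = inv (zpow mul e inv x n).
Proof.
  destruct n; simpl.
  - rewrite inv_e; reflexivity.
  - rewrite npow_inv; reflexivity.
  - rewrite npow_inv, inv_inv; reflexivity.
Qed.

Lemma npow_eqv x y m : eqv x y -> eqv (npow mul e x m) (npow mul e y m).
Proof.
  intro H. induction m; simpl. apply eqv_refl. apply eqv_mul; auto.
Qed.

Hypothesis Hc : two_step_nilpotent mul inv.

Lemma eqv_comm u v : eqv (mul u v) (mul v u).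
Proof.
  exists (commutator mul inv v u). split.
  - intro c. apply Hc.
  - unfold commutator. gsimp. reflexivity.
Qed.

Lemma eqv_conj u b : eqv b (mul (mul (inv u) b) u).
Proof.
  exists (commutator mul inv b u). split.
  - intro c. apply Hc.
  - unfold commutator. gsimp. reflexivity.
Qed.

Lemma npow_mul x y m :
  eqv (npow mul e (mul x y) m) (mul (npow mul e x m) (npow mul e y m)).
Proof.
  induction m; simpl.
  - apply eqv_of_eq. rewrite m_el; reflexivity.
  - apply eqv_trans with (mul (mul (npow mul e x m) (npow mul e y m)) (mul x y)).
    + apply eqv_mul; auto. apply eqv_refl.
    + apply eqv_trans with (mul (npow mul e x m) (mul (mul (npow mul e y m) x) y)).
      * apply eqv_of_eq. gsimp. reflexivity.
      * apply eqv_trans with (mul (npow mul e x m) (mul (mul x (npow mul e y m)) y)).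
        -- apply eqv_mul. apply eqv_refl. apply eqv_mul. apply eqv_comm. apply eqv_refl.
        -- apply eqv_of_eq. gsimp. reflexivity.
Qed.

Lemma zpow_eqv x y n : eqv x y -> eqv (zpow mul e inv x n) (zpow mul e inv y n).
Proof.
  intro H. destruct n; simpl. apply eqv_refl. apply npow_eqv; auto.
  apply npow_eqv. destruct H as [z [Hz ->]]. exists (inv z). split.
  apply central_inv; auto. rewrite inv_mul. apply central_inv; auto.
Qed.

Lemma zpow_mul x y n :
  eqv (zpow mul e inv (mul x y) n) (mul (zpow mul e inv x n) (zpow mul e inv y n)).
Proof.
  destruct n; simpl.
  - apply eqv_of_eq. rewrite m_el; reflexivity.
  - apply npow_mul.
  - rewrite inv_mul. eapply eqv_trans. apply npow_eqv. apply eqv_comm.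
    apply npow_mul.
Qed.

End Grp.
Arguments massoc {G mul e inv}.
Arguments m_el {G mul e inv}.
Arguments m_er {G mul e inv}.
Arguments m_vl {G mul e inv}.
Arguments m_vr {G mul e inv}.
Arguments cancel_l {G mul e inv}.
Arguments cancel_r {G mul e inv}.
Arguments inv_uniq {G mul e inv}.
Arguments inv_inv {G mul e inv}.
Arguments inv_mul {G mul e inv}.
Arguments inv_e {G mul e inv}.
Arguments conj_auto {G mul e inv}.
Arguments eqv_refl {G mul e inv}.
Arguments central_inv {G mul e inv}.
Arguments central_mul {G mul e inv}.
Arguments eqv_of_eq {G mul e inv}.
Arguments eqv_sym {G mul e inv}.
Arguments eqv_trans {G mul e inv}.
Arguments eqv_mul {G mul e inv}.
Arguments conj_eqv {G mul e inv}.
Arguments npow_comm {G mul e inv}.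
Arguments npow_inv {G mul e inv}.
Arguments zpow_opp {G mul e inv}.
Arguments npow_eqv {G mul e inv}.
Arguments eqv_comm {G mul e inv}.
Arguments eqv_conj {G mul e inv}.
Arguments npow_mul {G mul e inv}.
Arguments zpow_eqv {G mul e inv}.
Arguments zpow_mul {G mul e inv}.
Arguments eqv {G}.
Arguments central {G}.

Theorem proposition5p3 :
  (forall (G : Type) (mul : G -> G -> G) (e : G) (inv : G -> G),
     is_group mul e inv ->
     is_post_group mul e inv (fun a b => mul (mul (inv a) b) a)) /\
  (forall (G : Type) (mul : G -> G -> G) (e : G) (inv : G -> G) (n : Z),
     is_group mul e inv ->
     two_step_nilpotent mul inv ->
     n <> 0%Z ->
     is_post_group mul e inv
       (fun a b => mul (mul (zpow mul e inv a (- n)%Z) b) (zpow mul e inv a n))).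
Proof.
  split.
  - intros G mul e inv HG. split; [exact HG|split].
    + intro a. apply (conj_auto HG).
    + intros a b c.
      rewrite <- !(massoc HG), (cancel_r HG), !(inv_mul HG), <- !(massoc HG).
      reflexivity.
  - intros G mul e inv n HG Hc _. split; [exact HG|split].
    + intro a. rewrite (zpow_opp HG). apply (conj_auto HG).
    + intros a b c. rewrite !(zpow_opp HG).
      set (Pa := zpow mul e inv a n).
      set (Pb := zpow mul e inv b n).
      set (Px := zpow mul e inv (mul a (mul (mul (inv Pa) b) Pa)) n).
      rewrite (conj_eqv HG (mul Pb Pa) Px c).
      * rewrite !(inv_mul HG), <- !(massoc HG). reflexivity.
      * apply (eqv_sym HG). unfold Px, Pb, Pa.
        eapply (eqv_trans HG). apply (zpow_eqv HG).
        eapply (eqv_trans HG). apply (eqv_mul HG). apply (eqv_refl HG).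
        apply (eqv_sym HG). apply (eqv_conj HG Hc).
        apply (eqv_comm HG Hc).
        apply (zpow_mul HG Hc).
Qed.
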